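(* Let $K$ be a commutative ring with unit and let $\mathfrak X$ be a class of representations in $Rep\text{-}K$ which is a variety (respectively, a pseudovariety, a quasivariety, a universal class). Then $\mathfrak X$ can be defined (as $T^*$) by a set $T$ of action-type formulas if and only if $\mathfrak X$ is saturated, right-hereditary and right-local.
   Context: $Rep\text{-}K$ is the variety of two-sorted algebras (representations) $(V,G)$, where $V$ is a $K$-module, $G$ a group, and $\circ: V\times G\to V$ an action such that $a\mapsto a\circ g$ is $K$-linear, $(a\circ g_1)\circ g_2=a\circ g_1g_2$, and $a\circ 1=a$. Morphisms are pairs $(\alpha,\beta)$ with $\alpha$ a $K$-module homomorphism, $\beta$ a group homomorphism, and $(a\circ g)^\alpha=a^\alpha\circ g^\beta$. For countable sets $X,Y$, let $F=F(Y)$ be the free group on $Y$, $KF$ its group algebra, and $W=(XKF,F)$ the free representation ($XKF$ the free right $KF$-module on $X$, with $w\circ f=wf$). Homomorphisms $\mu=(\alpha,\beta):W\to(V,G)$ correspond to pairs of maps $X\to V$, $Y\to G$. Formulas are built from equalities $w\equiv0$ ($w\in XKF$) and $f\equiv1$ ($f\in F$) using $\vee,\wedge,\neg,\exists x,\exists y$; action-type formulas use only equalities $w\equiv0$ and quantifiers $\exists x$, $x\in X$. The value $Val_{(V,G)}(u)\subseteq Hom(W,(V,G))$: $\mu\in Val(w\equiv0)$ iff $w^\alpha=0$; $\mu\in Val(f\equiv1)$ iff $f^\beta=1$; connectives act as Boolean operations; $\mu\in Val(\exists x\,u)$ iff some $\nu\in Val(u)$ agrees with $\mu$ except possibly at $x$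 (similarly for $\exists y$). A formula holds in $(V,G)$ if its value is all of $Hom(W,(V,G))$; for a set $T$ of formulas, $T^*$ is the class of representations in which all formulas of $T$ hold. A variety is a class $T^*$ with $T$ a set of equalities; a pseudovariety: $T$ a set of disjunctions $u_1\vee\dots\vee u_n$ of equalities; a quasivariety: $T$ a set of quasi-identities $u_1\wedge\dots\wedge u_n\Rightarrow u$ with $u_i,u$ equalities; a universal class: $T$ a set of formulas $u_1\vee\dots\vee u_n\vee\neg v_1\vee\dots\vee\neg v_m$ with $u_i,v_j$ equalities. The faithful representation of $(V,G)$ is $(V,\overline G)$, $\overline G=G/N$ with $N$ the kernel of the action. $\mathfrak X$ is saturated if $(V,G)\in\mathfrak X\iff(V,\overline G)\in\mathfrak X$; right-hereditary if $(V,G)\in\mathfrak X$ implies $(V,H)\in\mathfrak X$ for all subgroups $H\le G$; right-local if $(V,G)\in\mathfrak X$ whenever $(V,H)\in\mathfrak X$ for all finitely generated $H\le G$. *)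

(* Defs.v *)
From HB Require Import structures.
From mathcomp Require Import all_boot all_algebra.
From Stdlib Require Import ProofIrrelevance FunctionalExtensionality
  PropExtensionality IndefiniteDescription.
Set Implicit Arguments. Unset Strict Implicit. Unset Printing Implicit Defensive.
Import GRing.Theory.
Local Open Scope ring_scope.

Record Grp := MkGrp {
  gT :> Type;
  gmul : gT -> gT -> gT;
  ginv : gT -> gT;
  gone : gT;
  gmulA : forall a b c, gmul a (gmul b c) = gmul (gmul a b) c;
  gmul1 : forall a, gmul gone a = a;
  gmulV : forall a, gmul (ginv a) a = gone }.

Record Rep (K : comPzRingType) := MkRep {
  rV : lmodType K;
  rG : Grp;
  ract : rV -> rG -> rV;
  ract_add : forall g a b, ract (a + b) g = ract a g + ract b g;
  ract_scale : forall g (k : K) a, ract (k *: a) g = k *: ract a g;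
  ract_mul : forall a g1 g2, ract (ract a g1) g2 = ract a (gmul g1 g2);
  ract_one : forall a, ract a (gone rG) = a }.

Record subgrp (G : Grp) := MkSubgrp {
  sg_mem : G -> Prop;
  sg_one : sg_mem (gone G);
  sg_mul : forall a b, sg_mem a -> sg_mem b -> sg_mem (gmul a b);
  sg_inv : forall a, sg_mem a -> sg_mem (ginv a) }.

Section SubGrp.
Variables (G : Grp) (H : subgrp G).
Definition sub_T := {g : G | sg_mem H g}.
Definition sub_mul (a b : sub_T) : sub_T :=
  exist _ (gmul (proj1_sig a) (proj1_sig b)) (sg_mul (proj2_sig a) (proj2_sig b)).
Definition sub_inv (a : sub_T) : sub_T :=
  exist _ (ginv (proj1_sig a)) (sg_inv (proj2_sig a)).
Definition sub_one : sub_T := exist _ (gone G) (sg_one H).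
Lemma sub_eq (a b : sub_T) : proj1_sig a = proj1_sig b -> a = b.
Proof. case: a b => [a pa] [b pb] /= e; subst b; by rewrite (proof_irrelevance _ pa pb). Qed.
Lemma sub_mulA a b c : sub_mul a (sub_mul b c) = sub_mul (sub_mul a b) c.
Proof. by apply: sub_eq; rewrite /= gmulA. Qed.
Lemma sub_mul1 a : sub_mul sub_one a = a.
Proof. by apply: sub_eq; rewrite /= gmul1. Qed.
Lemma sub_mulV a : sub_mul (sub_inv a) a = sub_one.
Proof. by apply: sub_eq; rewrite /= gmulV. Qed.
Definition subGrp : Grp := MkGrp sub_mulA sub_mul1 sub_mulV.
End SubGrp.

Definition fin_gen (G : Grp) (H : subgrp G) : Prop :=
  exists s : seq G, (forall x, List.In x s -> sg_mem H x) /\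
    (forall L : subgrp G, (forall x, List.In x s -> sg_mem L x) ->
       forall g, sg_mem H g -> sg_mem L g).

Section SubRep.
Variables (K : comPzRingType) (R : Rep K) (H : subgrp (rG R)).
Definition subRep : Rep K :=
  @MkRep K (rV R) (subGrp H) (fun a h => ract a (proj1_sig h))
    (fun g => @ract_add K R (proj1_sig g))
    (fun g => @ract_scale K R (proj1_sig g))
    (fun a g1 g2 => @ract_mul K R a (proj1_sig g1) (proj1_sig g2))
    (@ract_one K R).
End SubRep.

(* The faithful representation (V, G/N), N the kernel of the action.   *)
(* G/N is realised literally as the set of cosets gN = {h | a∘h = a∘g for all a}. *)
Section Faithful.
Variables (K : comPzRingType) (R : Rep K).
Local Notation G := (rG R).
Local Notation act := (@ract K R).
Definition coset (g : G) : G -> Prop := fun h => forall a, act a h = act a g.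
Definition QT := {P : G -> Prop | exists g, P = coset g}.
Definition qrep (P : QT) : G := proj1_sig (constructive_indefinite_description _ (proj2_sig P)).
Lemma qrepP (P : QT) : proj1_sig P = coset (qrep P).
Proof. exact: (proj2_sig (constructive_indefinite_description _ (proj2_sig P))). Qed.
Definition qmk (g : G) : QT := exist _ (coset g) (ex_intro _ g erefl).
Lemma coset_eq g g' : (forall a, act a g = act a g') -> coset g = coset g'.
Proof.
move=> e; apply: functional_extensionality => h; apply: propositional_extensionality.
by split=> H a; rewrite H e.
Qed.
Lemma QT_eq (P Q : QT) : (forall a, act a (qrep P) = act a (qrep Q)) -> P = Q.
Proof.
move=> e; case: P Q e => [P pP] [Q pQ] e.
have E : P = Q.
  have /= -> := qrepP (exist _ P pP); have /= -> := qrepP (exist _ Q pQ).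
  exact: coset_eq.
subst Q; by rewrite (proof_irrelevance _ pP pQ).
Qed.
Lemma qrep_mk g a : act a (qrep (qmk g)) = act a g.
Proof.
have e : coset g = coset (qrep (qmk g)) by exact: (qrepP (qmk g)).
have : coset g g by []. by rewrite e => ->.
Qed.
Definition qmul (P Q : QT) : QT := qmk (gmul (qrep P) (qrep Q)).
Definition qinv (P : QT) : QT := qmk (ginv (qrep P)).
Definition qone : QT := qmk (gone G).
Lemma qmulA P Q S : qmul P (qmul Q S) = qmul (qmul P Q) S.
Proof.
apply: QT_eq => a; rewrite !qrep_mk -!ract_mul !qrep_mk -!ract_mul.
by [].
Qed.
Lemma qmul1 P : qmul qone P = P.
Proof. by apply: QT_eq => a; rewrite qrep_mk -ract_mul qrep_mk ract_one. Qed.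
Lemma qmulV P : qmul (qinv P) P = qone.
Proof.
apply: QT_eq => a; rewrite !qrep_mk -ract_mul qrep_mk ract_mul gmulV //.
Qed.
Definition quotGrp : Grp := MkGrp qmulA qmul1 qmulV.
Lemma qact_mul a (P Q : quotGrp) :
  act (act a (qrep P)) (qrep Q) = act a (qrep (gmul P Q)).
Proof. by rewrite /= qrep_mk ract_mul. Qed.
Lemma qact_one a : act a (qrep (gone quotGrp)) = a.
Proof. by rewrite /= qrep_mk ract_one. Qed.
Definition faithfulRep : Rep K :=
  @MkRep K (rV R) quotGrp (fun a P => act a (qrep P))
    (fun g => @ract_add K R (qrep g))
    (fun g => @ract_scale K R (qrep g))
    qact_mul qact_one.
End Faithful.

Definition saturated (K : comPzRingType) (X : Rep K -> Prop) : Prop :=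
  forall R : Rep K, X R <-> X (faithfulRep R).
Definition right_hereditary (K : comPzRingType) (X : Rep K -> Prop) : Prop :=
  forall (R : Rep K) (H : subgrp (rG R)), X R -> X (subRep H).
Definition right_local (K : comPzRingType) (X : Rep K -> Prop) : Prop :=
  forall R : Rep K,
    (forall H : subgrp (rG R), fin_gen H -> X (subRep H)) -> X R.

(* Syntax.  Y = X = nat (countable sets of variables).                 *)
(* gterm: terms denoting the elements of the free group F = F(Y).      *)
Inductive gterm :=
  | GVar of nat | GOne | GMul of gterm & gterm | GInv of gterm.
(* mterm K: terms denoting the elements of the free KF-module XKF:     *)
Inductive mterm (K : Type) :=
  | MZero | MVar of nat | MAdd of mterm K & mterm K
  | MScale of K & mterm K | MAct of mterm K & gterm.
Arguments MZero {K}.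

Inductive formula (K : Type) :=
  | FEqV of mterm K
  | FEqG of gterm
  | FOr of formula K & formula K
  | FAnd of formula K & formula K
  | FNot of formula K
  | FExV of nat & formula K
  | FExG of nat & formula K.

Fixpoint geval (G : Grp) (b : nat -> G) (f : gterm) : G :=
  match f with
  | GVar y => b y
  | GOne => gone G
  | GMul f1 f2 => gmul (geval b f1) (geval b f2)
  | GInv f1 => ginv (geval b f1)
  end.

Fixpoint meval (K : comPzRingType) (R : Rep K) (a : nat -> rV R) (b : nat -> rG R)
  (w : mterm K) : rV R :=
  match w with
  | MZero => 0
  | MVar x => a x
  | MAdd w1 w2 => meval a b w1 + meval a b w2
  | MScale k w1 => k *: meval a b w1
  | MAct w1 f => ract (meval a b w1) (geval b f)
  end.

Definition upd (T : Type) (s : nat -> T) (n : nat) (v : T) : nat -> T :=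
  fun m => if m == n then v else s m.

(* mu = (alpha, beta) in Val(u), with mu given by its values on X and Y. *)
Fixpoint sat (K : comPzRingType) (R : Rep K) (a : nat -> rV R) (b : nat -> rG R)
  (u : formula K) : Prop :=
  match u with
  | FEqV w => meval a b w = 0
  | FEqG f => geval b f = gone (rG R)
  | FOr u1 u2 => sat a b u1 \/ sat a b u2
  | FAnd u1 u2 => sat a b u1 /\ sat a b u2
  | FNot u1 => ~ sat a b u1
  | FExV x u1 => exists v, sat (upd a x v) b u1
  | FExG y u1 => exists g, sat a (upd b y g) u1
  end.

(* u holds in R : Val(u) = Hom(W, R). *)
Definition holds (K : comPzRingType) (R : Rep K) (u : formula K) : Prop :=
  forall (a : nat -> rV R) (b : nat -> rG R), @sat K R a b u.

Definition Tstar (K : comPzRingType) (T : formula K -> Prop) (R : Rep K) : Prop :=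
  forall u, T u -> holds R u.

Definition defined_by (K : comPzRingType) (X : Rep K -> Prop) (T : formula K -> Prop) :=
  forall R, X R <-> Tstar T R.

Definition is_equality (K : Type) (u : formula K) : Prop :=
  match u with FEqV _ | FEqG _ => True | _ => False end.

Inductive disj_of (K : Type) (P : formula K -> Prop) : formula K -> Prop :=
  | disj_one u : P u -> disj_of P u
  | disj_cons u v : P u -> disj_of P v -> disj_of P (FOr u v).
Inductive conj_of (K : Type) (P : formula K -> Prop) : formula K -> Prop :=
  | conj_one u : P u -> conj_of P u
  | conj_cons u v : P u -> conj_of P v -> conj_of P (FAnd u v).

(* u1 ∧ ... ∧ un ⇒ u, with ⇒ read as ¬(...) ∨ u *)
Definition is_quasi_identity (K : Type) (u : formula K) : Prop :=
  exists c e, conj_of (@is_equality K) c /\ is_equality e /\ u = FOr (FNot c) e.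

Definition is_literal (K : Type) (u : formula K) : Prop :=
  is_equality u \/ exists v, is_equality v /\ u = FNot v.
Definition is_universal_formula (K : Type) (u : formula K) : Prop :=
  disj_of (@is_literal K) u.

Inductive action_type (K : Type) : formula K -> Prop :=
  | at_eq w : action_type (FEqV w)
  | at_or u v : action_type u -> action_type v -> action_type (FOr u v)
  | at_and u v : action_type u -> action_type v -> action_type (FAnd u v)
  | at_not u : action_type u -> action_type (FNot u)
  | at_ex x u : action_type u -> action_type (FExV x u).

Definition class_of_kind (K : comPzRingType) (P : formula K -> Prop)
  (X : Rep K -> Prop) : Prop :=
  exists T : formula K -> Prop, (forall u, T u -> P u) /\ defined_by X T.

Definition is_variety (K : comPzRingType) := class_of_kind (@is_equality K).
Definition is_pseudovariety (K : comPzRingType) :=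
  class_of_kind (disj_of (@is_equality K)).
Definition is_quasivariety (K : comPzRingType) := class_of_kind (@is_quasi_identity K).
Definition is_universal_class (K : comPzRingType) :=
  class_of_kind (@is_universal_formula K).

(* Main.v *)
Require Import Defs.
From mathcomp Require Import all_boot all_algebra.
From Stdlib Require Import Classical List Lia IndefiniteDescription.
Set Implicit Arguments. Unset Strict Implicit. Unset Printing Implicit Defensive.
Import GRing.Theory.
Local Open Scope ring_scope.

Lemma gmulVr (G : Grp) (a : G) : gmul a (ginv a) = gone G.
Proof.
rewrite -[gmul a _]gmul1 -{1}(gmulV (ginv a)) -gmulA (gmulA (ginv a) a) gmulV gmul1.
exact: gmulV.
Qed.

Fixpoint gbt (f : gterm) : nat :=
  match f with
  | GVar y => y.+1 | GOne => 0%N | GMul f1 f2 => maxn (gbt f1) (gbt f2)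
  | GInv f1 => gbt f1 end.
Fixpoint mbt (K : Type) (w : mterm K) : nat :=
  match w with
  | MZero => 0%N | MVar _ => 0%N | MAdd w1 w2 => maxn (mbt w1) (mbt w2)
  | MScale _ w1 => mbt w1 | MAct w1 f => maxn (mbt w1) (gbt f) end.
Fixpoint fbt (K : Type) (u : formula K) : nat :=
  match u with
  | FEqV w => mbt w | FEqG f => gbt f
  | FOr u v => maxn (fbt u) (fbt v) | FAnd u v => maxn (fbt u) (fbt v)
  | FNot u => fbt u | FExV _ u => fbt u | FExG _ u => fbt u end.

Section Transfer.
Variables (K : comPzRingType) (R1 R2 : Rep K) (phi : rV R1 -> rV R2).
Hypothesis phiD : forall u v, phi (u + v) = phi u + phi v.
Hypothesis phiZ : forall (k : K) u, phi (k *: u) = k *: phi u.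
Hypothesis phi_inj : forall u v, phi u = phi v -> u = v.
Hypothesis phi_sur : forall v, exists u, phi u = v.
Variables (b1 : nat -> rG R1) (b2 : nat -> rG R2).

Definition relb n := forall y, (y < n)%N -> forall v,
  phi (ract v (b1 y)) = ract (phi v) (b2 y).

Lemma relb_l m n : relb (maxn m n) -> relb m.
Proof. move=> h y hy; apply: h; exact: leq_trans hy (leq_maxl _ _). Qed.
Lemma relb_r m n : relb (maxn m n) -> relb n.
Proof. move=> h y hy; apply: h; exact: leq_trans hy (leq_maxr _ _). Qed.

Lemma geval_tr f : relb (gbt f) -> forall v,
  phi (ract v (geval b1 f)) = ract (phi v) (geval b2 f).
Proof.
elim: f => [y|| f1 IH1 f2 IH2 | f IH] /= h v.
- exact: h.
- by rewrite !ract_one.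
- by rewrite -!ract_mul IH2 ?IH1 //; [exact: relb_l h | exact: relb_r h].
- set w := ract v (ginv (geval b1 f)).
  have e : v = ract w (geval b1 f) by rewrite /w ract_mul gmulV ract_one.
  rewrite e IH // ract_mul gmulVr ract_one //.
Qed.

Lemma phi0 : phi 0 = 0.
Proof. by rewrite -(scale0r (0 : rV R1)) phiZ scale0r. Qed.

Lemma meval_tr a1 a2 w : (forall x, a2 x = phi (a1 x)) -> relb (mbt w) ->
  phi (meval a1 b1 w) = meval a2 b2 w.
Proof.
move=> ha; elim: w => [|x|w1 IH1 w2 IH2|k w IH|w IH f] /= h.
- exact: phi0.
- by rewrite ha.
- by rewrite phiD IH1 ?IH2 //; [exact: relb_r h | exact: relb_l h].
- by rewrite phiZ IH.
- by rewrite geval_tr ?IH //; [exact: relb_l h | exact: relb_r h].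
Qed.

Lemma sat_tr u : action_type u -> forall a1 a2, (forall x, a2 x = phi (a1 x)) ->
  relb (fbt u) -> (sat a1 b1 u <-> sat a2 b2 u).
Proof.
elim=> {u} [w|u v _ IHu _ IHv|u v _ IHu _ IHv|u _ IH|x u _ IH] a1 a2 ha /= h.
- rewrite -(meval_tr ha h); split=> [->|e]; first exact: phi0.
  by apply: phi_inj; rewrite e phi0.
- rewrite (IHu a1 a2) ?(IHv a1 a2) //; [exact: relb_r h | exact: relb_l h].
- rewrite (IHu a1 a2) ?(IHv a1 a2) //; [exact: relb_r h | exact: relb_l h].
- by rewrite (IH a1 a2).
- split=> [[v1 hv]|[v2 hv]].
  + exists (phi v1); apply/(IH (upd a1 x v1)) => // y.
    by rewrite /upd; case: (y == x).
  + have [v1 e] := phi_sur v2; subst v2; exists v1.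
    apply/(IH (upd a1 x v1) (upd a2 x (phi v1))) => // y.
    by rewrite /upd; case: (y == x).
Qed.
End Transfer.

Section Main.
Variable K : comPzRingType.

Lemma holds_faithful (R : Rep K) u : action_type u ->
  (holds R u <-> holds (faithfulRep R) u).
Proof.
move=> hu; split=> h a b.
- apply: (proj1 (@sat_tr K R (faithfulRep R) (fun v => v) (fun _ _ => erefl)
     (fun _ _ => erefl) (fun _ _ e => e) (fun v => ex_intro _ v erefl)
     (fun y => qrep (b y)) b u hu a a (fun _ => erefl) _)); solve [exact: h | by []].
- apply: (proj2 (@sat_tr K R (faithfulRep R) (fun v => v) (fun _ _ => erefl)
     (fun _ _ => erefl) (fun _ _ e => e) (fun v => ex_intro _ v erefl)
     b (fun y => qmk (b y)) u hu a a (fun _ => erefl) _)); solve [exact: h | by move=> y _ v /=; rewrite qrep_mk].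
Qed.

Lemma holds_sub (R : Rep K) (H : subgrp (rG R)) u : action_type u ->
  holds R u -> holds (subRep H) u.
Proof.
move=> hu h a b.
apply: (proj1 (@sat_tr K R (subRep H) (fun v => v) (fun _ _ => erefl)
     (fun _ _ => erefl) (fun _ _ e => e) (fun v => ex_intro _ v erefl)
     (fun y => proj1_sig (b y)) b u hu a a (fun _ => erefl) _)); solve [exact: h | by []].
Qed.

Definition gen_subgrp (G : Grp) (s : list G) : subgrp G.
refine (@MkSubgrp G (fun g => forall L : subgrp G,
  (forall x, List.In x s -> sg_mem L x) -> sg_mem L g) _ _ _).
- move=> L _; exact: sg_one.
- move=> a b ha hb L hL; apply: sg_mul; [exact: ha | exact: hb].
- move=> a ha L hL; apply: sg_inv; exact: ha.
Defined.

Lemma holds_local (R : Rep K) u : action_type u ->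
  (forall H : subgrp (rG R), fin_gen H -> holds (subRep H) u) -> holds R u.
Proof.
move=> hu h a b.
set n := fbt u.
set s := List.map b (List.seq 0 n).
set H := gen_subgrp s.
have memH : forall y, (y < n)%N -> sg_mem H (b y).
  move=> y hy L hL; apply: hL; apply: List.in_map; apply/List.in_seq.
  move/ltP: hy; lia.
have fgH : fin_gen H.
  exists s; split; last by move=> L hL g hg; exact: hg hL.
  by move=> x hx L hL; exact: hL.
have ex : forall y, exists h : sub_T H, (y < n)%N -> proj1_sig h = b y.
  move=> y; case: (boolP (y < n)%N) => hy.
  - by exists (exist _ (b y) (memH y hy)).
  - by exists (sub_one H).
pose b' y := proj1_sig (constructive_indefinite_description _ (ex y)).
have hb' : forall y, (y < n)%N -> proj1_sig (b' y) = b y.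
  move=> y; exact: (proj2_sig (constructive_indefinite_description _ (ex y))).
apply: (proj2 (@sat_tr K R (subRep H) (fun v => v) (fun _ _ => erefl)
     (fun _ _ => erefl) (fun _ _ e => e) (fun v => ex_intro _ v erefl)
     b b' u hu a a (fun _ => erefl) _)); solve [exact: h fgH a b' | by move=> y hy v /=; rewrite hb'].
Qed.

Fixpoint qf (u : formula K) : Prop :=
  match u with
  | FEqV _ | FEqG _ => True
  | FOr u v | FAnd u v => qf u /\ qf v
  | FNot u => qf u
  | FExV _ _ | FExG _ _ => False end.

Fixpoint tr (u : formula K) : formula K :=
  match u with
  | FEqV w => FEqV w
  | FEqG f => FNot (FExV 0 (FNot (FEqV (MAdd (MAct (MVar K 0) f)
                                            (MScale (-1) (MVar K 0))))))
  | FOr u v => FOr (tr u) (tr v)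
  | FAnd u v => FAnd (tr u) (tr v)
  | FNot u => FNot (tr u)
  | FExV x u => FExV x (tr u)
  | FExG _ u => tr u end.

Lemma tr_at u : action_type (tr u).
Proof.
elim: u => [w|f|u IHu v IHv|u IHu v IHv|u IH|x u IH|y u IH] /=.
- exact: at_eq.
- by apply: at_not; apply: at_ex; apply: at_not; apply: at_eq.
- exact: at_or.
- exact: at_and.
- exact: at_not.
- exact: at_ex.
- exact: IH.
Qed.

Lemma tr_sat (R : Rep K) a b u : qf u ->
  (@sat K (faithfulRep R) a b u <-> sat a b (tr u)).
Proof.
elim: u a => [w|f|u IHu v IHv|u IHu v IHv|u IH|x u IH|y u IH] a //= hq.
- split.
  + move=> e [v]; apply; rewrite /upd eqxx e /= qrep_mk ract_one.
    by rewrite scaleN1r subrr.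
  + move=> hn; apply: QT_eq => v.
    apply: NNPP => hv; apply: hn; exists v => hv'; apply: hv.
    move: hv'; rewrite /upd eqxx scaleN1r => /eqP; rewrite subr_eq0 => /eqP ->.
    by rewrite qrep_mk ract_one.
- by case: hq => h1 h2; rewrite IHu // IHv.
- by case: hq => h1 h2; rewrite IHu // IHv.
- by rewrite IH.
Qed.

Lemma disj_qf (P : formula K -> Prop) u : (forall v, P v -> qf v) -> disj_of P u -> qf u.
Proof. move=> hP; elim=> [v hv|v w hv _ IH] /=; [exact: hP | split=> //; exact: hP]. Qed.
Lemma conj_qf (P : formula K -> Prop) u : (forall v, P v -> qf v) -> conj_of P u -> qf u.
Proof. move=> hP; elim=> [v hv|v w hv _ IH] /=; [exact: hP | split=> //; exact: hP]. Qed.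
Lemma eq_qf (u : formula K) : is_equality u -> qf u.
Proof. by case: u. Qed.
Lemma lit_qf (u : formula K) : is_literal u -> qf u.
Proof. case=> [|[v [hv ->]]]; [exact: eq_qf | exact: (eq_qf hv)]. Qed.

End Main.

Theorem theorem2p2 (K : comPzRingType) (X : Rep K -> Prop) :
  (is_variety X \/ is_pseudovariety X \/ is_quasivariety X \/ is_universal_class X) ->
  ((exists T : formula K -> Prop, (forall u, T u -> action_type u) /\ defined_by X T)
   <-> saturated X /\ right_hereditary X /\ right_local X).
Proof.
move=> hkind; split.
- case=> T [hT dT]; split; [|split].
  + move=> R; rewrite !dT; split=> h u hu.
    * exact: (proj1 (holds_faithful R (hT u hu)) (h u hu)).
    * exact: (proj2 (holds_faithful R (hT u hu)) (h u hu)).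
  + move=> R H; rewrite !dT => h u hu; exact: (@holds_sub K R H u (hT u hu) (h u hu)).
  + move=> R h; apply/dT => u hu; apply: holds_local; first exact: hT.
    by move=> H fg; apply: (proj1 (dT _)) => //; exact: h.
- case=> hsat _.
  have [T0 [qT0 dT0]] : exists T0 : formula K -> Prop,
      (forall u, T0 u -> qf u) /\ defined_by X T0.
    case: hkind => [[T [hT dT]]|[[T [hT dT]]|[[T [hT dT]]|[T [hT dT]]]]];
      exists T; split=> // u /hT.
    * exact: eq_qf.
    * exact: disj_qf (@eq_qf K).
    * case=> [c [e [hc [he ->]]]] /=; split; [exact: conj_qf (@eq_qf K) hc | exact: eq_qf].
    * exact: disj_qf (@lit_qf K).
  exists (fun u => action_type u /\ forall R', X R' -> holds R' u); split.
    by move=> u [].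
  move=> R; split; first by move=> XR u [_ h]; exact: h.
  move=> hT; apply: NNPP => nX.
  have nXf : ~ Tstar T0 (faithfulRep R) by rewrite -dT0 -hsat.
  have [u hu] : exists u, ~ (T0 u -> holds (faithfulRep R) u).
    by apply: not_all_ex_not.
  have [T0u nh] : T0 u /\ ~ holds (faithfulRep R) u.
    by split; [apply: NNPP => c; apply: hu => /c | move=> c; apply: hu].
  have [a ha] := not_all_ex_not _ _ nh.
  have [b hb] := not_all_ex_not _ _ ha.
  have Ttr : action_type (tr u) /\ forall R', X R' -> holds R' (tr u).
    split; first exact: tr_at.
    move=> R' XR'; apply: (proj2 (@holds_faithful K R' (tr u) (tr_at u))).
    move=> a' b'; apply: (proj1 (@tr_sat K R' a' b' u (qT0 u T0u))).
    by move: XR'; rewrite hsat dT0 => /(_ u T0u).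
  have := hT _ Ttr; move/(proj1 (@holds_faithful K R (tr u) (tr_at u))) => /(_ a b).
  by move/(proj2 (@tr_sat K R a b u (qT0 u T0u))).
Qed.
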